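(* Let $(G,o)$ be a strong orientation of a cubic graph $G$. Let $e_1=u_1v_1$, $e_2=u_2v_2$ and $f=w_2w_1$ be pairwise non-adjacent edges of $G$ oriented $u_1\to v_1$, $u_2\to v_2$ and $w_2\to w_1$ in $(G,o)$, all three deletable in $(G,o)$. Let $G'$ be obtained from $G$ by subdividing $e_1$ with a new vertex $x_1$, subdividing $e_2$ with a new vertex $x_2$, subdividing $w_1w_2$ with new vertices $y_1,y_2$ so that it becomes the path $w_1y_1y_2w_2$, and adding the edges $x_1y_1$ and $x_2y_2$. Let $(G',o')$ be an orientation of $G'$ containing $u_1\to x_1$, $x_1\to v_1$, $y_1\to w_1$, $y_2\to y_1$, $w_2\to y_2$, $u_2\to x_2$, $x_2\to v_2$, with $o'(e)=o(e)$ for all other edges of $G'$ except $x_1y_1$ and $x_2y_2$. Then: (a) if $(G',o')$ contains $y_1\to x_1$ and $x_2\to y_2$, then $(G',o')$ is strong and $D(G',o')\supseteq (D(G,o)\setminus\{e_1,e_2,f\})\cup\{u_1x_1,x_1y_1,y_1w_1,y_2w_2,x_2y_2,x_2v_2\}$; (b) if $(G',o')$ contains $x_1\to y_1$ and $y_2\to x_2$, then $(G',o')$ is strong and $D(G',o')\supseteq (D(G,o)\setminus\{e_1,e_2,f\})\cup\{x_1v_1,y_1y_2,u_2x_2\}$.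
   Context: An orientation is strong if for every ordered pair of distinct vertices $u,v$ there is a directed $uv$-path. An edge $e$ is deletable in an orientation $(G,o)$ if the restriction of $o$ to $E(G)\setminus\{e\}$ is a strong orientation of $G-e$. $D(G,o)$ denotes the set of edges deletable in $(G,o)$. *)

(* Defs.v *)
(* Oriented (multi)graphs: a finite vertex type V, a finite
   edge type E, and tail/head maps; an edge e is oriented tl e -> hd e. *)
From mathcomp Require Import all_boot.
Set Implicit Arguments. Unset Strict Implicit. Unset Printing Implicit Defensive.

Section Orient.
Variables (V E : finType) (tl hd : E -> V).

Definition arcs (P : pred E) : rel V :=
  fun a b => [exists e, [&& P e, tl e == a & hd e == b]].

Definition strong : Prop := forall u v : V, connect (arcs predT) u v.

Definition deletable (e : E) : Prop :=
  forall u v : V, connect (arcs (predC1 e)) u v.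

(* every vertex has degree 3 (a loop would count twice) *)
Definition cubic : Prop :=
  forall v : V, #|[pred e | tl e == v]| + #|[pred e | hd e == v]| = 3.

Definition nonadjacent (e e' : E) : bool :=
  [&& e != e', tl e != tl e', tl e != hd e', hd e != tl e' & hd e != hd e'].
End Orient.

Section Construction.
Variables (V E : finType) (tl hd : E -> V) (e1 e2 f : E).

Definition oldE := {e : E | e \notin [:: e1; e2; f]}.
(* new vertices: 0 = x1, 1 = x2, 2 = y1, 3 = y2 *)
Definition V' := (V + 'I_4)%type.
Definition E' := (oldE + 'I_9)%type.

Definition vx1 : V' := inr (@Ordinal 4 0 isT).
Definition vx2 : V' := inr (@Ordinal 4 1 isT).
Definition vy1 : V' := inr (@Ordinal 4 2 isT).
Definition vy2 : V' := inr (@Ordinal 4 3 isT).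

(* u1 = tl e1, v1 = hd e1, u2 = tl e2, v2 = hd e2, w2 = tl f, w1 = hd f.
   New edges (tail -> head), indexed 0..8:
     0: u1 -> x1     1: x1 -> v1     2: y1 -> w1     3: y2 -> y1
     4: w2 -> y2     5: u2 -> x2     6: x2 -> v2
     7: edge x1y1 : y1 -> x1 if caseA, x1 -> y1 otherwise
     8: edge x2y2 : x2 -> y2 if caseA, y2 -> x2 otherwise *)
Definition newTail (caseA : bool) (i : 'I_9) : V' :=
  nth vx1 [:: inl (tl e1); vx1; vy1; vy2; inl (tl f); inl (tl e2); vx2;
              (if caseA then vy1 else vx1); (if caseA then vx2 else vy2)] i.
Definition newHead (caseA : bool) (i : 'I_9) : V' :=
  nth vx1 [:: vx1; inl (hd e1); inl (hd f); vy1; vy2; vx2; inl (hd e2);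
              (if caseA then vx1 else vy1); (if caseA then vy2 else vx2)] i.

Definition tl' (caseA : bool) (e : E') : V' :=
  match e with inl e0 => inl (tl (val e0)) | inr i => newTail caseA i end.
Definition hd' (caseA : bool) (e : E') : V' :=
  match e with inl e0 => inl (hd (val e0)) | inr i => newHead caseA i end.

Definition newE (i : nat) (H : i < 9) : E' := inr (Ordinal H).
End Construction.
Arguments oldE {E} e1 e2 f.
Arguments tl' {V E} tl e1 e2 f caseA e.
Arguments hd' {V E} hd e1 e2 f caseA e.

(* Main.v *)
Require Import Defs.
From mathcomp Require Import all_boot.
Set Implicit Arguments. Unset Strict Implicit. Unset Printing Implicit Defensive.

Section Gen.
Variables (V E : finType) (tl hd : E -> V) (e1 e2 f : E) (b : bool).
Local Notation T := (tl' tl e1 e2 f b).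
Local Notation H := (hd' hd e1 e2 f b).

Lemma stepi (P' : pred (E' e1 e2 f)) (d : E' e1 e2 f) :
  P' d -> connect (arcs T H P') (T d) (H d).
Proof. by move=> Pd; apply: connect1; apply/existsP; exists d; rewrite Pd !eqxx. Qed.

Lemma lift (R : rel (V' V)) (P : pred E)
  (h : forall a c, arcs tl hd P a c -> connect R (inl a) (inl c)) u v :
  connect (arcs tl hd P) u v -> connect R (inl u) (inl v).
Proof.
move/connectP=> [p pth ->]; elim: p u pth => [|w p IH] u /=; first by move=> _; exact: connect0.
by case/andP=> a c; apply: connect_trans (h _ _ a) (IH _ c).
Qed.

Lemma ord4 (z : 'I_4) : inr z = vx1 V \/ inr z = vx2 V \/ inr z = vy1 V \/ inr z = vy2 V.
Proof.
case: z => [[|[|[|[|k]]]] Hk]; rewrite /vx1 /vx2 /vy1 /vy2.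
- by left; congr inr; apply: val_inj.
- by right; left; congr inr; apply: val_inj.
- by right; right; left; congr inr; apply: val_inj.
- by right; right; right; congr inr; apply: val_inj.
- by [].
Qed.

Lemma main_gen (P : pred E) (P' : pred (E' e1 e2 f)) :
 (forall u v, connect (arcs tl hd P) u v) ->
 (forall e (He : e \notin [:: e1; e2; f]), P e -> P' (inl (exist _ e He))) ->
 (P e1 -> connect (arcs T H P') (inl (tl e1)) (inl (hd e1))) ->
 (P e2 -> connect (arcs T H P') (inl (tl e2)) (inl (hd e2))) ->
 (P f -> connect (arcs T H P') (inl (tl f)) (inl (hd f))) ->
 (forall z, z \in [:: vx1 V; vx2 V; vy1 V; vy2 V] ->
    (exists a, connect (arcs T H P') (inl a) z) /\
    (exists a, connect (arcs T H P') z (inl a))) ->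
 forall x y, connect (arcs T H P') x y.
Proof.
move=> hG hold h1 h2 h3 hio.
have old : forall a c, connect (arcs T H P') (inl a) (inl c).
  move=> a c; apply: lift (hG a c) => {}a {}c /existsP [e /and3P [Pe /eqP Ht /eqP Hh]].
  subst a c; case: (boolP (e \in [:: e1; e2; f])) => He.
    by rewrite !inE in He; case/or3P: He => /eqP Ee; subst e; [apply: h1|apply: h2|apply: h3].
  by apply: connect1; apply/existsP; exists (inl (exist _ e He)); rewrite hold //= !eqxx.
have nv : forall z : 'I_4, (exists a, connect (arcs T H P') (inl a) (inr z)) /\
    (exists a, connect (arcs T H P') (inr z) (inl a)).
  by move=> z; apply: hio; case: (ord4 z) => [->|[->|[->|->]]]; rewrite !inE eqxx ?orbT.
case=> [a|z] [c|w] //.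
- by case: (nv w) => [[a' Ha'] _]; apply: connect_trans (old a a') Ha'.
- by case: (nv z) => [_ [a' Ha']]; apply: connect_trans Ha' (old a' c).
- case: (nv z) => [_ [a' Ha']]; case: (nv w) => [[c' Hc'] _].
  exact: connect_trans Ha' (connect_trans (old a' c') Hc').
Qed.
End Gen.

Ltac edge i := apply: connect1; apply/existsP; exists (inr (@Ordinal 9 i isT));
  apply/and3P; split; [done | apply/eqP; reflexivity | apply/eqP; reflexivity].
Ltac stp i := match goal with |- is_true (connect (arcs ?T ?H ?P) ?x ?z) =>
  apply: (@connect_trans _ _ (H (inr (@Ordinal 9 i isT))) x z); [edge i | ] end.
Ltac stpb i := match goal with |- is_true (connect (arcs ?T ?H ?P) ?x ?z) =>
  apply: (@connect_trans _ _ (T (inr (@Ordinal 9 i isT))) x z); [ | edge i ] end.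
Ltac reachb n := first [ apply: connect0 | match n with S ?m =>
  first [ stpb 0; reachb m | stpb 1; reachb m | stpb 2; reachb m | stpb 3; reachb m
        | stpb 4; reachb m | stpb 5; reachb m | stpb 6; reachb m | stpb 7; reachb m
        | stpb 8; reachb m ] end ].
Ltac reach n := first [ apply: connect0 | match n with S ?m =>
  first [ stp 0; reach m | stp 1; reach m | stp 2; reach m | stp 3; reach m
        | stp 4; reach m | stp 5; reach m | stp 6; reach m | stp 7; reach m
        | stp 8; reach m ] end ].

Theorem mainTheorem10 (V E : finType) (tl hd : E -> V) (e1 e2 f : E) :
  cubic tl hd ->
  strong tl hd ->
  nonadjacent tl hd e1 e2 -> nonadjacent tl hd e1 f -> nonadjacent tl hd e2 f ->
  deletable tl hd e1 -> deletable tl hd e2 -> deletable tl hd f ->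
  (* (a): y1 -> x1 and x2 -> y2 *)
  (strong (tl' tl e1 e2 f true) (hd' hd e1 e2 f true)
   /\ (forall e : oldE e1 e2 f, deletable tl hd (val e) ->
         deletable (tl' tl e1 e2 f true) (hd' hd e1 e2 f true) (inl e))
   /\ (forall i : 'I_9, val i \in [:: 0; 7; 2; 4; 8; 6] ->
         deletable (tl' tl e1 e2 f true) (hd' hd e1 e2 f true) (inr i)))
  /\
  (* (b): x1 -> y1 and y2 -> x2 *)
  (strong (tl' tl e1 e2 f false) (hd' hd e1 e2 f false)
   /\ (forall e : oldE e1 e2 f, deletable tl hd (val e) ->
         deletable (tl' tl e1 e2 f false) (hd' hd e1 e2 f false) (inl e))
   /\ (forall i : 'I_9, val i \in [:: 1; 3; 5] ->
         deletable (tl' tl e1 e2 f false) (hd' hd e1 e2 f false) (inr i))).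
Proof.
move=> _ sG _ _ _ d1 d2 d3.
split; (split; [|split]).
- move=> u v; apply: (main_gen (P := predT)); [    | try (move=> *; exact: isT)   | first [move=> _; reach 3 | let H := fresh "H" in (intro H; exfalso; revert H; simpl; rewrite eqxx; done)]   | first [move=> _; reach 3 | let H := fresh "H" in (intro H; exfalso; revert H; simpl; rewrite eqxx; done)]   | first [move=> _; reach 3 | let H := fresh "H" in (intro H; exfalso; revert H; simpl; rewrite eqxx; done)]   | move=> z; rewrite !inE => /or4P [] /eqP ->; (split; [eexists; reachb 4 | eexists; reach 4]) ].
    exact: sG.
- move=> e0 De0 u v; apply: (main_gen (P := predC1 (val e0))); [    | try (move=> *; exact: isT)   | first [move=> _; reach 3 | let H := fresh "H" in (intro H; exfalso; revert H; simpl; rewrite eqxx; done)]   | first [move=> _; reach 3 | let H := fresh "H" in (intro H; exfalso; revert H; simpl; rewrite eqxx; done)]   | first [move=> _; reach 3 | let H := fresh "H" in (intro H; exfalso; revert H; simpl; rewrite eqxx; done)]   | move=> z; rewrite !inE => /or4P [] /eqP ->; (split; [eexists; reachb 4 | eexists; reach 4]) ].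
    exact: De0.
  move=> e He Pe; apply/negP => /eqP [] Eq; move: Pe; by rewrite -Eq /= eqxx.
- case=> m Hi Hm; case: m Hi Hm => [|[|[|[|[|[|[|[|[|m]]]]]]]]] Hi Hm; rewrite !inE /= in Hm; first [by case: Hm | clear Hm];
  have -> : Hi = isT by apply: bool_irrelevance.
  + move=> u v; apply: (main_gen (P := predC1 e1)); [    | try (move=> *; exact: isT)   | first [move=> _; reach 3 | let H := fresh "H" in (intro H; exfalso; revert H; simpl; rewrite eqxx; done)]   | first [move=> _; reach 3 | let H := fresh "H" in (intro H; exfalso; revert H; simpl; rewrite eqxx; done)]   | first [move=> _; reach 3 | let H := fresh "H" in (intro H; exfalso; revert H; simpl; rewrite eqxx; done)]   | move=> z; rewrite !inE => /or4P [] /eqP ->; (split; [eexists; reachb 4 | eexists; reach 4]) ].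
    exact: d1.
  + move=> u v; apply: (main_gen (P := predC1 f)); [    | try (move=> *; exact: isT)   | first [move=> _; reach 3 | let H := fresh "H" in (intro H; exfalso; revert H; simpl; rewrite eqxx; done)]   | first [move=> _; reach 3 | let H := fresh "H" in (intro H; exfalso; revert H; simpl; rewrite eqxx; done)]   | first [move=> _; reach 3 | let H := fresh "H" in (intro H; exfalso; revert H; simpl; rewrite eqxx; done)]   | move=> z; rewrite !inE => /or4P [] /eqP ->; (split; [eexists; reachb 4 | eexists; reach 4]) ].
    exact: d3.
  + move=> u v; apply: (main_gen (P := predC1 f)); [    | try (move=> *; exact: isT)   | first [move=> _; reach 3 | let H := fresh "H" in (intro H; exfalso; revert H; simpl; rewrite eqxx; done)]   | first [move=> _; reach 3 | let H := fresh "H" in (intro H; exfalso; revert H; simpl; rewrite eqxx; done)]   | first [move=> _; reach 3 | let H := fresh "H" in (intro H; exfalso; revert H; simpl; rewrite eqxx; done)]   | move=> z; rewrite !inE => /or4P [] /eqP ->; (split; [eexists; reachb 4 | eexists; reach 4]) ].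
    exact: d3.
  + move=> u v; apply: (main_gen (P := predC1 e2)); [    | try (move=> *; exact: isT)   | first [move=> _; reach 3 | let H := fresh "H" in (intro H; exfalso; revert H; simpl; rewrite eqxx; done)]   | first [move=> _; reach 3 | let H := fresh "H" in (intro H; exfalso; revert H; simpl; rewrite eqxx; done)]   | first [move=> _; reach 3 | let H := fresh "H" in (intro H; exfalso; revert H; simpl; rewrite eqxx; done)]   | move=> z; rewrite !inE => /or4P [] /eqP ->; (split; [eexists; reachb 4 | eexists; reach 4]) ].
    exact: d2.
  + move=> u v; apply: (main_gen (P := predT)); [    | try (move=> *; exact: isT)   | first [move=> _; reach 3 | let H := fresh "H" in (intro H; exfalso; revert H; simpl; rewrite eqxx; done)]   | first [move=> _; reach 3 | let H := fresh "H" in (intro H; exfalso; revert H; simpl; rewrite eqxx; done)]   | first [move=> _; reach 3 | let H := fresh "H" in (intro H; exfalso; revert H; simpl; rewrite eqxx; done)]   | move=> z; rewrite !inE => /or4P [] /eqP ->; (split; [eexists; reachb 4 | eexists; reach 4]) ].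
    exact: sG.
  + move=> u v; apply: (main_gen (P := predT)); [    | try (move=> *; exact: isT)   | first [move=> _; reach 3 | let H := fresh "H" in (intro H; exfalso; revert H; simpl; rewrite eqxx; done)]   | first [move=> _; reach 3 | let H := fresh "H" in (intro H; exfalso; revert H; simpl; rewrite eqxx; done)]   | first [move=> _; reach 3 | let H := fresh "H" in (intro H; exfalso; revert H; simpl; rewrite eqxx; done)]   | move=> z; rewrite !inE => /or4P [] /eqP ->; (split; [eexists; reachb 4 | eexists; reach 4]) ].
    exact: sG.
- move=> u v; apply: (main_gen (P := predT)); [    | try (move=> *; exact: isT)   | first [move=> _; reach 3 | let H := fresh "H" in (intro H; exfalso; revert H; simpl; rewrite eqxx; done)]   | first [move=> _; reach 3 | let H := fresh "H" in (intro H; exfalso; revert H; simpl; rewrite eqxx; done)]   | first [move=> _; reach 3 | let H := fresh "H" in (intro H; exfalso; revert H; simpl; rewrite eqxx; done)]   | move=> z; rewrite !inE => /or4P [] /eqP ->; (split; [eexists; reachb 4 | eexists; reach 4]) ].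
    exact: sG.
- move=> e0 De0 u v; apply: (main_gen (P := predC1 (val e0))); [    | try (move=> *; exact: isT)   | first [move=> _; reach 3 | let H := fresh "H" in (intro H; exfalso; revert H; simpl; rewrite eqxx; done)]   | first [move=> _; reach 3 | let H := fresh "H" in (intro H; exfalso; revert H; simpl; rewrite eqxx; done)]   | first [move=> _; reach 3 | let H := fresh "H" in (intro H; exfalso; revert H; simpl; rewrite eqxx; done)]   | move=> z; rewrite !inE => /or4P [] /eqP ->; (split; [eexists; reachb 4 | eexists; reach 4]) ].
    exact: De0.
  move=> e He Pe; apply/negP => /eqP [] Eq; move: Pe; by rewrite -Eq /= eqxx.
- case=> m Hi Hm; case: m Hi Hm => [|[|[|[|[|[|[|[|[|m]]]]]]]]] Hi Hm; rewrite !inE /= in Hm; first [by case: Hm | clear Hm];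
  have -> : Hi = isT by apply: bool_irrelevance.
  + move=> u v; apply: (main_gen (P := predC1 e1)); [    | try (move=> *; exact: isT)   | first [move=> _; reach 3 | let H := fresh "H" in (intro H; exfalso; revert H; simpl; rewrite eqxx; done)]   | first [move=> _; reach 3 | let H := fresh "H" in (intro H; exfalso; revert H; simpl; rewrite eqxx; done)]   | first [move=> _; reach 3 | let H := fresh "H" in (intro H; exfalso; revert H; simpl; rewrite eqxx; done)]   | move=> z; rewrite !inE => /or4P [] /eqP ->; (split; [eexists; reachb 4 | eexists; reach 4]) ].
    exact: d1.
  + move=> u v; apply: (main_gen (P := predC1 f)); [    | try (move=> *; exact: isT)   | first [move=> _; reach 3 | let H := fresh "H" in (intro H; exfalso; revert H; simpl; rewrite eqxx; done)]   | first [move=> _; reach 3 | let H := fresh "H" in (intro H; exfalso; revert H; simpl; rewrite eqxx; done)]   | first [move=> _; reach 3 | let H := fresh "H" in (intro H; exfalso; revert H; simpl; rewrite eqxx; done)]   | move=> z; rewrite !inE => /or4P [] /eqP ->; (split; [eexists; reachb 4 | eexists; reach 4]) ].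
    exact: d3.
  + move=> u v; apply: (main_gen (P := predC1 e2)); [    | try (move=> *; exact: isT)   | first [move=> _; reach 3 | let H := fresh "H" in (intro H; exfalso; revert H; simpl; rewrite eqxx; done)]   | first [move=> _; reach 3 | let H := fresh "H" in (intro H; exfalso; revert H; simpl; rewrite eqxx; done)]   | first [move=> _; reach 3 | let H := fresh "H" in (intro H; exfalso; revert H; simpl; rewrite eqxx; done)]   | move=> z; rewrite !inE => /or4P [] /eqP ->; (split; [eexists; reachb 4 | eexists; reach 4]) ].
    exact: d2.
Qed.
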